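(* Let $G$ be a finite simple graph with edge weight function $w$ and vertex weight function $w_1$. Then (a) the multiplicity of any root of $\eta_{(w,w_1)}(G,x)$ is at most the number of paths in any family of vertex-disjoint paths (single vertices allowed) covering all vertices of $G$; (b) the number of distinct roots of $\eta_{(w,w_1)}(G,x)$ is at least the number of vertices of a longest path in $G$.
   Context: An edge weight function $w$ assigns a nonzero complex number to each edge; a vertex weight function $w_1$ assigns a real number (possibly $0$) to each vertex; induced subgraphs carry restricted weights. For $A\subseteq E(G)$, $w(A)=\prod_{e\in A}w(e)$. $\mu_w(G,x)=\sum_{M}(-1)^{|M|}|w(M)|^2x^{n-2|M|}$ over all matchings $M$ (including empty), $n=|V(G)|$. $\eta_{(w,w_1)}(G,x)=\sum_{S\subseteq V(G)}(-1)^{|V(G)\setminus S|}\big(\prod_{y\in V(G)\setminus S}w_1(y)\big)\mu_w(G[S],x)$ with $G[S]$ the induced subgraph and $\mu_w$ of the empty graph equal to $1$. *)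

(* Defs.v *)
From HB Require Import structures.
From mathcomp Require Import all_boot all_order all_algebra.
Set Implicit Arguments. Unset Strict Implicit. Unset Printing Implicit Defensive.
Import Order.TTheory GRing.Theory Num.Theory.
Local Open Scope ring_scope.

(* A finite simple graph: vertex type V : finType, adjacency adj : rel V,
   assumed symmetric and irreflexive (hypotheses in the theorem).
   Edges are the 2-element sets [set x; y] with adj x y. *)

Definition is_edge_in (V : finType) (adj : rel V) (S : {set V}) (e : {set V}) : bool :=
  [exists x : V, exists y : V,
     [&& adj x y, x \in S, y \in S & e == [set x; y]]].

Definition is_matching (V : finType) (adj : rel V) (S : {set V})
    (M : {set {set V}}) : bool :=
  [forall e in M, is_edge_in adj S e] &&
  [forall e1 in M, forall e2 in M, (e1 != e2) ==> [disjoint e1 & e2]].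

Definition mu_w (C : numClosedFieldType) (V : finType) (adj : rel V)
    (w : {set V} -> C) (S : {set V}) : {poly C} :=
  \sum_(M : {set {set V}} | is_matching adj S M)
     ((-1) ^+ #|M| * \prod_(e in M) `|w e| ^+ 2) *: 'X^(#|S| - 2 * #|M|).

Definition eta_w (C : numClosedFieldType) (V : finType) (adj : rel V)
    (w : {set V} -> C) (w1 : V -> C) : {poly C} :=
  \sum_(S : {set V})
     ((-1) ^+ #|~: S| * \prod_(y in ~: S) w1 y) *: mu_w adj w S.

Definition is_gpath (V : finType) (adj : rel V) (p : seq V) : bool :=
  if p is x :: q then uniq p && path adj x q else false.

Definition is_path_cover (V : finType) (adj : rel V) (P : seq (seq V)) : bool :=
  all (is_gpath adj) P && uniq (flatten P) && (#|V| == size (flatten P))%N.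

(* Main.v *)
Require Import Defs.
From HB Require Import structures.
From mathcomp Require Import all_boot all_order all_algebra.
From mathcomp Require Import ring zify.
Import Order.TTheory GRing.Theory Num.Theory.
Local Open Scope ring_scope.

Module CombM.
Set Implicit Arguments. Unset Strict Implicit. Unset Printing Implicit Defensive.


Section Comb.
Variables (C : numClosedFieldType) (V : finType) (adj : rel V).
Hypothesis adj_sym : symmetric adj.
Hypothesis adj_irr : irreflexive adj.
Variable w : {set V} -> C.

Lemma edgeP (S e : {set V}) : reflect (exists x y, [/\ adj x y, x \in S, y \in S & e = [set x; y]])
  (is_edge_in adj S e).
Proof.
apply: (iffP existsP) => [[x /existsP [y /and4P [a b c /eqP d]]]|[x [y [a b c d]]]].
  by exists x, y.
by exists x; apply/existsP; exists y; rewrite a b c d eqxx.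
Qed.

Lemma edge_inE (S e : {set V}) : is_edge_in adj S e = is_edge_in adj [set: V] e && (e \subset S).
Proof.
apply/edgeP/andP => [[x [y [a b c ->]]]|[/edgeP [x [y [a _ _ ->]]] sub]].
  split; first by apply/edgeP; exists x, y; rewrite !inE.
  by apply/subsetP => z; rewrite !inE => /orP [] /eqP ->.
exists x, y; split => //; apply: (subsetP sub); rewrite !inE eqxx ?orbT //.
Qed.

Lemma edge_card (S e : {set V}) : is_edge_in adj S e -> #|e| = 2%N.
Proof.
case/edgeP => x [y [a _ _ ->]]; rewrite cards2.
by case: eqP a => // ->; rewrite adj_irr.
Qed.

Lemma matchingP (S : {set V}) (M : {set {set V}}) : reflect
  ((forall e, e \in M -> is_edge_in adj S e) /\
   (forall e1 e2, e1 \in M -> e2 \in M -> e1 != e2 -> [disjoint e1 & e2]))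
  (is_matching adj S M).
Proof.
apply: (iffP andP) => [[/forall_inP h1 /forall_inP h2]|[h1 h2]].
  split => // e1 e2 i1 i2; move/forall_inP: (h2 _ i1) => /(_ _ i2) /implyP; exact.
split; apply/forall_inP => // e1 i1; apply/forall_inP => e2 i2; apply/implyP; exact: h2.
Qed.

Lemma matching_card (S : {set V}) (M : {set {set V}}) : is_matching adj S M -> (2 * #|M| <= #|S|)%N.
Proof.
case/matchingP => h1 h2.
have tr : trivIset M by apply/trivIsetP => A B iA iB; exact: h2.
have e1 : #|cover M| = (2 * #|M|)%N.
  move/eqP: tr => <-; rewrite (eq_bigr (fun _ => 2%N)); last by move=> e /h1 /edge_card.
  by rewrite sum_nat_const mulnC.
rewrite -e1; apply: subset_leq_card; apply/bigcupsP => e /h1.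
by rewrite edge_inE => /andP [].
Qed.


Definition Fm (T : {set V}) (M : {set {set V}}) : {poly C} :=
  ((-1) ^+ #|M| * \prod_(e in M) `|w e| ^+ 2) *: 'X^(#|T| - 2 * #|M|).

Lemma mu_wE T : mu_w adj w T = \sum_(M | is_matching adj T M) Fm T M.
Proof. by []. Qed.

Lemma matchD1 (T : {set V}) u M :
  is_matching adj T M && ~~ [exists e in M, u \in e] = is_matching adj (T :\ u) M.
Proof.
apply/andP/matchingP => [[/matchingP [h1 h2] /exists_inPn h3]|[h1 h2]].
  split => // e eM; move: (h1 e eM); rewrite (edge_inE T) (edge_inE (T :\ u)) subsetD1.
  by case/andP => -> ->; rewrite h3.
split; last by apply/exists_inPn => e /h1; rewrite edge_inE subsetD1 => /and3P [].
apply/matchingP; split => // e /h1; rewrite (edge_inE _ e) (edge_inE T e) subsetD1.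
by case/and3P => -> ->.
Qed.


Lemma partA (T : {set V}) u : u \in T ->
  \sum_(M | is_matching adj T M && ~~ [exists e in M, u \in e]) Fm T M
  = 'X * mu_w adj w (T :\ u).
Proof.
move=> uT; rewrite mu_wE mulr_sumr (eq_bigl _ _ (matchD1 T u)).
apply: eq_bigr => M /matching_card le; rewrite /Fm -scalerAr -exprS; congr (_ *: 'X^_).
by rewrite (cardsD1 u T) uT add1n subSn.
Qed.

Lemma disjF (A B : {set V}) x : [disjoint A & B] -> x \in A -> x \in B -> False.
Proof. by rewrite disjoint_subset => /subsetP h /h; rewrite !inE => /negP. Qed.

Lemma edge_u (T : {set V}) M e u : is_matching adj T M -> e \in M -> u \in e ->
  exists v, [/\ v \in T :\ u, adj u v & e = [set u; v]].
Proof.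
case/matchingP => h1 _ eM; case/edgeP: (h1 e eM) => x [y [a xT yT ->]].
rewrite !inE => /orP [] /eqP ->.
  exists y; rewrite !inE yT andbT a; split => //.
  by apply: contraTneq a => ->; rewrite adj_irr.
exists x; rewrite !inE xT andbT adj_sym a setUC; split => //.
by apply: contraTneq a => ->; rewrite adj_irr.
Qed.

Lemma uniq_v (T : {set V}) M u v v' : is_matching adj T M ->
  [set u; v] \in M -> [set u; v'] \in M -> v' != u -> v' = v.
Proof.
case/matchingP => _ h2 i1 i2 nu.
case: (eqVneq [set u; v] [set u; v']) => [E|ne].
  have : v' \in [set u; v] by rewrite E !inE eqxx orbT.
  by rewrite !inE (negbTE nu) => /eqP.
by case: (disjF (h2 _ _ i1 i2 ne) (x := u)); rewrite !inE eqxx.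
Qed.

Lemma partB (T : {set V}) u :
  \sum_(M | is_matching adj T M && [exists e in M, u \in e]) Fm T M
  = \sum_(v in T :\ u | adj u v)
       \sum_(M | is_matching adj T M && ([set u; v] \in M)) Fm T M.
Proof.
under [RHS]eq_bigr => v Bv.
  rewrite (eq_bigl (fun M => (is_matching adj T M && [exists e in M, u \in e])
                              && ([set u; v] \in M))); last first.
    move=> M /=; case: ([set u; v] \in M) / boolP => iM; rewrite ?andbF ?andbT //.
    suff -> : [exists e in M, u \in e] by rewrite andbT.
    by apply/exists_inP; exists [set u; v]; rewrite // !inE eqxx.
  rewrite big_mkcondr /=.
over.
rewrite exchange_big /=; apply: eq_bigr => M /andP [mM /exists_inP [e eM ue]].
rewrite -big_mkcondr /=.
have [v [vT a E]] := edge_u mM eM ue; rewrite E in eM.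
rewrite (big_pred1 v) // => v' /=; apply/idP/idP => [/andP [/andP [v'T _] i']|/eqP ->].
  apply/eqP; apply: (uniq_v mM eM i'); by move: v'T; rewrite !inE => /andP [].
by rewrite vT a eM.
Qed.

Lemma disj2 (f : {set V}) u v : u \notin f -> v \notin f -> [disjoint [set u; v] & f].
Proof.
move=> uf vf; rewrite disjoint_subset; apply/subsetP => x.
by rewrite !inE => /orP [] /eqP ->.
Qed.

Lemma matchU1 (T : {set V}) u v M : v \in T :\ u -> adj u v -> u \in T ->
  is_matching adj T ([set u; v] |: M) && ([set u; v] \notin M)
  = is_matching adj (T :\ u :\ v) M.
Proof.
move=> vT a uT; set e := [set u; v].
have eE : is_edge_in adj T e by apply/edgeP; exists u, v; move: vT; rewrite !inE => /andP [_ ->].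
apply/andP/matchingP => [[/matchingP [h1 h2] eM]|[h1 h2]].
  have fe : forall f, f \in M -> [disjoint e & f].
    move=> f fM; apply: h2; rewrite ?inE ?fM ?eqxx ?orbT //.
    by apply: contraNneq eM => ->.
  split; last by move=> e1 e2 i1 i2; apply: h2; rewrite inE ?i1 ?i2 orbT.
  move=> f fM; move: (h1 f); rewrite inE fM orbT => /(_ isT).
  rewrite (edge_inE T) (edge_inE (T :\ u :\ v) f) => /andP [-> sub] /=.
  rewrite !subsetD1 sub /=; apply/andP; split.
    by apply/negP => xf; apply: (disjF (fe f fM) _ xf); rewrite /e !inE eqxx ?orbT.
  by apply/negP => xf; apply: (disjF (fe f fM) _ xf); rewrite /e !inE eqxx ?orbT.
have Mnot : forall f, f \in M -> (u \notin f) && (v \notin f).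
  move=> f /h1; rewrite edge_inE !subsetD1 => /andP [_ /andP [/andP [_ h3] h4]].
  by rewrite h3 h4.
split; last first.
  apply/negP => /Mnot; by rewrite !inE eqxx.
apply/matchingP; split.
  move=> f; rewrite in_setU1 => /orP [/eqP -> //|/h1].
  rewrite (edge_inE (T :\ u :\ v) f) (edge_inE T f) !subsetD1.
  by case/andP => -> /andP [/andP [-> _] _].
move=> e1 e2; rewrite !in_setU1 => /orP [/eqP ->|i1] /orP [/eqP ->|i2] //; first by rewrite eqxx.
- by move=> _; case/andP: (Mnot _ i2) => ? ?; apply: disj2.
- by move=> _; rewrite disjoint_sym; case/andP: (Mnot _ i1) => ? ?; apply: disj2.
- exact: h2.
Qed.

Lemma partC (T : {set V}) u v : v \in T :\ u -> adj u v -> u \in T ->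
  \sum_(M | is_matching adj T M && ([set u; v] \in M)) Fm T M
  = - (`|w [set u; v]| ^+ 2) *: mu_w adj w (T :\ u :\ v).
Proof.
move=> vT a uT; set e := [set u; v].
rewrite (reindex_onto (fun M' => e |: M') (fun M => M :\ e)); last first.
  by move=> M /andP [_ eM]; rewrite setD1K.
rewrite mu_wE scaler_sumr; apply: eq_big => M.
  rewrite -(matchU1 M vT a uT) setU11 andbT; congr (_ && _).
  apply/eqP/idP => [E|eM]; last by rewrite setU1K.
  by rewrite -E !inE eqxx.
move=> /andP [_ /eqP E].
have eM : e \notin M by rewrite -E !inE eqxx.
have cT : #|T| = (#|T :\ u :\ v|).+2.
  by rewrite (cardsD1 u T) uT (cardsD1 v (T :\ u)) vT.
rewrite /Fm scalerA cardsU1 eM big_setU1 //= cT exprS mulnDr muln1 add2n !subSS.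
congr (_ *: _).
by rewrite exprD expr1 mulN1r !mulNr mulrCA.
Qed.

Lemma mu_rec (T : {set V}) u : u \in T ->
  mu_w adj w T = 'X * mu_w adj w (T :\ u)
     - \sum_(v in T :\ u | adj u v) (`|w [set u; v]| ^+ 2) *: mu_w adj w (T :\ u :\ v).
Proof.
move=> uT; rewrite mu_wE (bigID (fun M : {set {set V}} => [exists e in M, u \in e])) /= addrC partA //.
rewrite partB -sumrN; congr (_ + _); apply: eq_bigr => v /andP [vT a].
by rewrite partC // scaleNr.
Qed.

Lemma mu_set0 : mu_w adj w set0 = 1.
Proof.
rewrite mu_wE (big_pred1 set0) => [|M]; first by rewrite /Fm !cards0 big_set0 expr0 mulr1 scale1r.
apply/idP/idP => [/matchingP [h1 _]|/eqP ->].
  apply/eqP/setP => e; rewrite inE; apply/negP => /h1.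
  by rewrite edge_inE subset0 => /andP [/edgeP [x [y [_ _ _ ->]]]] /eqP /setP /(_ x); rewrite !inE eqxx.
by apply/matchingP; split => e; rewrite inE.
Qed.

Variable w1 : V -> C.

Definition sg (S T : {set V}) : C := (-1) ^+ #|S :\: T| * \prod_(y in S :\: T) w1 y.
Definition etaS (S : {set V}) : {poly C} :=
  \sum_(T : {set V} | T \subset S) sg S T *: mu_w adj w T.

Lemma eta_etaS : eta_w adj w w1 = etaS setT.
Proof.
rewrite /eta_w /etaS; apply: eq_big => [T|T _]; first by rewrite subsetT.
by rewrite /sg setTD.
Qed.

Lemma subsumU (F : {set V} -> {poly C}) (S : {set V}) u : u \in S ->
  \sum_(T : {set V} | (T \subset S) && (u \in T)) F T = \sum_(T : {set V} | T \subset S :\ u) F (u |: T).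
Proof.
move=> uS; rewrite (reindex_onto (fun T' : {set V} => u |: T') (fun T : {set V} => T :\ u)); last first.
  by move=> T /andP [_ uT]; rewrite setD1K.
apply: eq_bigl => T; rewrite setU11 andbT subUset sub1set uS subsetD1 /=.
case: (boolP (u \in T)) => uT; last by rewrite setU1K ?eqxx ?andbT.
rewrite andbF; apply/negbTE/negP => /andP [_ /eqP E].
by move: uT; rewrite -E !inE eqxx.
Qed.

Lemma subsum (F : {set V} -> {poly C}) (S : {set V}) u : u \in S ->
  \sum_(T : {set V} | T \subset S) F T
  = \sum_(T : {set V} | T \subset S :\ u) F T + \sum_(T : {set V} | T \subset S :\ u) F (u |: T).
Proof.
move=> uS; rewrite (bigID (fun T : {set V} => u \in T)) /= addrC subsumU //; congr (_ + _).
by apply: eq_bigl => T; rewrite subsetD1.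
Qed.

Lemma exch (S' : {set V}) u (H : {set V} -> V -> {poly C}) :
  \sum_(T : {set V} | T \subset S') \sum_(v in T | adj u v) H T v
  = \sum_(v in S' | adj u v) \sum_(T : {set V} | (T \subset S') && (v \in T)) H T v.
Proof.
transitivity (\sum_(T : {set V} | T \subset S') \sum_(v in S' | adj u v) if v \in T then H T v else 0).
  apply: eq_bigr => T sT; rewrite -big_mkcondr /=; apply: eq_bigl => v.
  case: (boolP (v \in T)) => vT; rewrite ?andbF ?andbT //= ?(subsetP sT v vT) //.
rewrite exchange_big /=; apply: eq_bigr => v _; by rewrite -big_mkcondr.
Qed.

Lemma etaS_rec (S : {set V}) u : u \in S ->
  etaS S = ('X - (w1 u)%:P) * etaS (S :\ u)
     - \sum_(v in S :\ u | adj u v) (`|w [set u; v]| ^+ 2) *: etaS (S :\ u :\ v).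
Proof.
move=> uS; rewrite /etaS (subsum _ uS) mulrBl.
set S' := S :\ u.
have uS' : u \notin S' by rewrite !inE eqxx.
have sgU : forall T : {set V}, T \subset S' -> sg S (u |: T) = sg S' T.
  move=> T sT; rewrite /sg; suff -> : S :\: (u |: T) = S' :\: T by [].
  by apply/setP => y; rewrite !inE; case: (y == u); case: (y \in T); case: (y \in S).
have sgN : forall T : {set V}, T \subset S' -> sg S T = - w1 u * sg S' T.
  move=> T sT; have E : S :\: T = u |: (S' :\: T).
    apply/setP => y; rewrite !inE; case: eqP => // ->.
    by rewrite uS andbT; apply/negP => /(subsetP sT); rewrite !inE eqxx.
  have nuS : u \notin S' :\: T by rewrite !inE eqxx andbF.
  rewrite /sg E cardsU1 nuS big_setU1 //= add1n exprS.
  by rewrite mulN1r !mulNr mulrCA.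
rewrite [RHS]addrAC [RHS]addrC; congr (_ + _).
  rewrite -mulNr mulr_sumr; apply: eq_bigr => T sT.
  by rewrite sgN // -polyCN mul_polyC scalerA.
have ET : forall T : {set V}, T \subset S' -> (u |: T) :\ u = T.
  by move=> T sT; rewrite setU1K //; apply/negP => /(subsetP sT); rewrite !inE eqxx.
under eq_bigr => T sT.
  rewrite (mu_rec (setU11 u T)) (sgU _ sT) ET // scalerBr scalerAr.
  over.
rewrite big_split /= -mulr_sumr; congr (_ + _).
rewrite sumrN; congr (- _).
rewrite (eq_bigr (fun T : {set V} => \sum_(v in T | adj u v) sg S' T *: (`|w [set u; v]| ^+ 2 *: mu_w adj w (T :\ v)))); last first.
  by move=> T _; rewrite scaler_sumr.
rewrite exch; apply: eq_bigr => v /andP [vS' a].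
rewrite scaler_sumr (subsumU _ vS'); apply: eq_bigr => T sT.
have vT : v \notin T by apply/negP => /(subsetP sT); rewrite !inE eqxx.
rewrite setU1K // scalerA mulrC -scalerA; congr (_ *: _).
rewrite /sg; suff -> : S' :\: (v |: T) = S' :\ v :\: T by [].
by apply/setP => y; rewrite !inE; case: (y == u); case: (y == v); case: (y \in T); case: (y \in S).
Qed.

Lemma etaS0 : etaS set0 = 1.
Proof.
rewrite /etaS (big_pred1 set0) => [|T]; last by rewrite subset0.
by rewrite mu_set0 /sg setD0 cards0 big_set0 expr0 mul1r scale1r.
Qed.
End Comb.

End CombM.

Module AbsM.
Set Implicit Arguments. Unset Strict Implicit. Unset Printing Implicit Defensive.


Section Abs.
Variables (C : numClosedFieldType) (V : finType) (adj : rel V).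
Variables (f : {set V} -> {poly C}) (a : V -> C) (c : V -> V -> C).
Hypothesis a_real : forall u, a u \is Num.real.
Hypothesis c_pos : forall u v, adj u v -> 0 < c u v.
Hypothesis f0 : f set0 = 1.
Hypothesis f_rec : forall (S : {set V}) u, u \in S ->
  f S = ('X - (a u)%:P) * f (S :\ u) - \sum_(v in S :\ u | adj u v) c u v *: f (S :\ u :\ v).

Lemma card_D1 (S : {set V}) u : u \in S -> #|S| = (#|S :\ u|).+1.
Proof. by move=> uS; rewrite (cardsD1 u S) uS. Qed.

Lemma set_ind (P : {set V} -> Prop) :
  P set0 -> (forall (S : {set V}) u, u \in S -> (forall T : {set V}, (#|T| < #|S|)%N -> P T) -> P S) -> forall S, P S.
Proof.
move=> P0 Hs S; have [n le] := ubnP #|S|; elim: n S le => // n IH S le.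
case: (set_0Vmem S) => [->|[u uS]] //; apply: (Hs S u uS) => T lt.
by apply: IH; apply: leq_trans lt _.
Qed.

Definition rp (p : {poly C}) := map_poly Num.conj p = p.

Lemma rpC x : x \is Num.real -> rp x%:P.
Proof. by move=> hx; rewrite /rp map_polyC /=; move/CrealP: hx => ->. Qed.

Lemma rpZ x p : x \is Num.real -> rp p -> rp (x *: p).
Proof. by move=> hx hp; rewrite /rp map_polyZ /= hp; move/CrealP: hx => ->. Qed.

Lemma rp_horner p x : x \is Num.real -> rp p -> p.[x] \is Num.real.
Proof. by move=> hx hp; apply/CrealP; rewrite -horner_map /= hp; move/CrealP: hx => ->. Qed.

Lemma f_real (S : {set V}) : rp (f S).
Proof.
elim/set_ind: S => [|S u uS IH]; first by rewrite f0 /rp rmorph1.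
have IH1 : rp (f (S :\ u)) by apply: IH; rewrite (card_D1 uS).
rewrite (f_rec uS) /rp rmorphB rmorphM rmorphB /= map_polyX IH1 (rpC (a_real u)).
congr (_ - _); rewrite rmorph_sum; apply: eq_bigr => v /andP [vS av].
apply: rpZ; first by apply: gtr0_real; apply: c_pos.
apply: IH; rewrite (card_D1 uS) (card_D1 vS) ltnS; exact: leqnSn.
Qed.

Lemma f_monic (S : {set V}) : (f S \is monic) && (size (f S) == #|S|.+1).
Proof.
elim/set_ind: S => [|S u uS IH]; first by rewrite f0 monic1 size_poly1 cards0.
have /andP [m1 /eqP s1] : (f (S :\ u) \is monic) && (size (f (S :\ u)) == #|S :\ u|.+1).
  by apply: IH; rewrite (card_D1 uS).
have sP : size (('X - (a u)%:P) * f (S :\ u)) = #|S|.+1.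
  by rewrite size_monicM ?monicXsubC ?monic_neq0 // size_XsubC s1 (card_D1 uS).
have sQ : (size (- \sum_(v in S :\ u | adj u v) c u v *: f (S :\ u :\ v)) < #|S|.+1)%N.
  rewrite size_opp; apply: leq_ltn_trans (size_sum _ _ _) _.
  rewrite (card_D1 uS) ltnS; apply/bigmax_leqP => v /andP [vS _].
  apply: leq_trans (size_scale_leq _ _) _.
  have /andP [_ /eqP ->] : (f (S :\ u :\ v) \is monic) && (size (f (S :\ u :\ v)) == #|S :\ u :\ v|.+1).
    by apply: IH; rewrite (card_D1 uS) (card_D1 vS) ltnS; exact: leqnSn.
  by rewrite (card_D1 vS).
rewrite (f_rec uS); apply/andP; split.
  by rewrite monicE lead_coefDl ?sP // -monicE monicMl ?monicXsubC.
by rewrite size_polyDl ?sP.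
Qed.

Lemma f_neq0 (S : {set V}) : f S != 0.
Proof. by case/andP: (f_monic S) => /monic_neq0. Qed.

Lemma f_size (S : {set V}) : size (f S) = #|S|.+1.
Proof. by case/andP: (f_monic S) => _ /eqP. Qed.


Lemma im_inv (y q : C) : y \is Num.real -> y ^+ 2 <= y * 'Im q -> y * 'Im (q^-1) <= 0.
Proof.
move=> yr le; rewrite ImV mulNr mulrN oppr_le0 mulrA divr_ge0 ?exprn_ge0 ?normr_ge0 //.
by apply: le_trans le; apply: real_exprn_even_ge0.
Qed.

Lemma im_key (z : C) : 'Im z != 0 -> forall S : {set V},
  (f S).[z] != 0 /\
  (forall u, u \in S -> 'Im z ^+ 2 <= 'Im z * 'Im ((f S).[z] / (f (S :\ u)).[z])).
Proof.
move=> nz; have yr : 'Im z \is Num.real by apply: Creal_Im.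
have y2 : 0 < 'Im z ^+ 2 by rewrite real_exprn_even_gt0.
elim/set_ind => [|S u0 u0S IH].
  by split => [|u]; rewrite ?f0 ?hornerC ?oner_neq0 ?inE.
have part2 : forall u, u \in S -> 'Im z ^+ 2 <= 'Im z * 'Im ((f S).[z] / (f (S :\ u)).[z]).
  move=> u uS.
  have [F1 _] := IH (S :\ u) (ltac:(by rewrite (card_D1 uS))).
  have E : (f S).[z] / (f (S :\ u)).[z] = (z - a u) -
      \sum_(v in S :\ u | adj u v) c u v * ((f (S :\ u :\ v)).[z] / (f (S :\ u)).[z]).
    rewrite (f_rec uS) hornerD hornerN hornerM horner_sum !hornerE mulrBl mulfK //.
    by rewrite mulr_suml; congr (_ - _); apply: eq_bigr => v _; rewrite hornerZ mulrA.
  rewrite E raddfB raddf_sum raddfB /= (Creal_ImP _ (a_real u)) subr0 mulrBr -expr2.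
  rewrite lerDl -mulrN -sumrN mulr_sumr sumr_ge0 // => v /andP [vS av].
  have cr : c u v \is Num.real by apply/gtr0_real/c_pos.
  have lt2 : (#|S :\ u :\ v| < #|S|)%N by rewrite (card_D1 uS) (card_D1 vS).
  have [F2 _] := IH _ lt2.
  have [_ H] := IH (S :\ u) (ltac:(by rewrite (card_D1 uS))).
  rewrite ImMl // -invf_div mulrN oppr_ge0 mulrCA.
  apply: mulr_ge0_le0; [exact: ltW (c_pos av) | exact: im_inv yr (H v vS)].
split => //; apply/negP => /eqP nS; have := part2 u0 u0S.
rewrite nS mul0r raddf0 mulr0 => le.
by have := lt_le_trans y2 le; rewrite ltxx.
Qed.

Lemma f_root_real (S : {set V}) z : root (f S) z -> z \is Num.real.
Proof.
move=> rz; apply/Creal_ImP/eqP; apply: contraTT rz => nz.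
by case: (im_key nz S).
Qed.


Lemma setD1C (A : {set V}) x y : A :\ x :\ y = A :\ y :\ x.
Proof. by apply/setP => t; rewrite !inE; case: (t == x); case: (t == y). Qed.

Lemma exch2 (A : {set V}) (P : pred V) (G : V -> V -> {poly C}) :
  \sum_(w in A) \sum_(v in A :\ w | P v) G v w = \sum_(v in A | P v) \sum_(w in A :\ v) G v w.
Proof.
rewrite (exchange_big_dep (fun v => (v \in A) && P v)) /=; last first.
  by move=> w v _; rewrite !inE => /andP [/andP [_ ->] ->].
apply: eq_bigr => v /andP [vA Pv]; apply: eq_bigl => w; rewrite !inE Pv vA andbT.
by rewrite eq_sym; case: (w \in A); rewrite ?andbF ?andbT.
Qed.

Lemma sumD1 (A : {set V}) u (F : V -> {poly C}) : u \in A ->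
  \sum_(v in A) F v = F u + \sum_(v in A :\ u) F v.
Proof.
move=> uA; rewrite (bigD1 u) //=; congr (_ + _); apply: eq_bigl => v.
by rewrite !inE andbC.
Qed.

Lemma f_deriv (S : {set V}) : (f S)^`() = \sum_(u in S) f (S :\ u).
Proof.
elim/set_ind: S => [|S u uS IH]; first by rewrite f0 derivC big_pred0 // => u; rewrite inE.
have IH1 : (f (S :\ u))^`() = \sum_(w in S :\ u) f (S :\ u :\ w).
  by apply: IH; rewrite (card_D1 uS).
rewrite (sumD1 _ uS) {1}(f_rec uS) derivB derivM derivXsubC mul1r IH1 raddf_sum /=.
rewrite -addrA; congr (_ + _).
have E : forall w, w \in S :\ u -> f (S :\ w) = ('X - (a u)%:P) * f (S :\ u :\ w)
     - \sum_(v in S :\ u :\ w | adj u v) c u v *: f (S :\ u :\ w :\ v).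
  move=> w wS; have uSw : u \in S :\ w.
    by rewrite !inE uS andbT; move: wS; rewrite !inE eq_sym => /andP [].
  by rewrite (f_rec uSw) (setD1C S w u).
rewrite (eq_bigr _ E) sumrB mulr_sumr; congr (_ - _).
under eq_bigr => v _ do rewrite derivZ.
have IH2 : forall v, v \in S :\ u -> (f (S :\ u :\ v))^`() = \sum_(w in S :\ u :\ v) f (S :\ u :\ v :\ w).
  move=> v vS; apply: IH; rewrite (card_D1 uS) (card_D1 vS) ltnS; exact: leqnSn.
rewrite (exch2 (S :\ u) (adj u) (fun v w => c u v *: f (S :\ u :\ w :\ v))).
apply: eq_bigr => v /andP [vS _]; rewrite IH2 // scaler_sumr; apply: eq_bigr => w _.
by rewrite (setD1C (S :\ u) w v).
Qed.


Definition sumL (L : seq (C * {poly C})) : {poly C} := \sum_(x <- L) x.1 *: x.2 ^+ 2.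

Fixpoint PL (n : nat) (S : {set V}) (u v : V) : seq (C * {poly C}) :=
  if n is n'.+1 then
    (if adj u v then [:: (c u v, f (S :\ u :\ v))] else [::]) ++
    flatten (map (fun w => map (fun x => (c u w * x.1, x.2)) (PL n' (S :\ u) w v))
                 (filter (fun w => adj u w && (w != v)) (enum (S :\ u))))
  else [::].

Lemma sumL_PL n (S : {set V}) u v : sumL (PL n.+1 S u v) =
  (if adj u v then c u v *: f (S :\ u :\ v) ^+ 2 else 0)
  + \sum_(w in S :\ u | adj u w && (w != v)) c u w *: sumL (PL n (S :\ u) w v).
Proof.
rewrite /sumL /= big_cat; congr (_ + _).
  by case: (adj u v); rewrite ?big_cons ?big_nil //= addr0.
rewrite big_flatten big_map big_filter big_enum_cond /=; apply: eq_bigr => w _.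
by rewrite big_map scaler_sumr; apply: eq_bigr => x _; rewrite scalerA.
Qed.

Lemma sumD1c (A : {set V}) v (P : pred V) (F : V -> {poly C}) : v \in A ->
  \sum_(w in A | P w) F w = (if P v then F v else 0) + \sum_(w in A | P w && (w != v)) F w.
Proof.
move=> vA; case: (boolP (P v)) => Pv.
  rewrite (bigD1 v) /=; last by rewrite vA Pv.
  by congr (_ + _); apply: eq_bigl => w; rewrite andbA.
rewrite add0r; apply: eq_bigl => w; case: (eqVneq w v) => [->|]; by rewrite ?(negbTE Pv) ?andbF ?andbT.
Qed.

Lemma I3 (S : {set V}) u v : u \in S -> v \in S -> u != v ->
  f (S :\ u) * f (S :\ v) - f S * f (S :\ u :\ v) = sumL (PL #|S| S u v).
Proof.
elim/set_ind: S u v => [|S u0 _ IH] u v; first by rewrite inE.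
move=> uS vS nuv; set H := S :\ u.
have vH : v \in H by rewrite !inE vS andbT eq_sym.
have uSv : u \in S :\ v by rewrite !inE uS andbT.
rewrite (card_D1 uS) sumL_PL (f_rec uS) (f_rec uSv) (setD1C S v u) -/H.
set A := \sum_(w in H | adj u w) c u w *: f (H :\ w).
set B := \sum_(w in H :\ v | adj u w) c u w *: f (H :\ v :\ w).
have -> : f H * (('X - (a u)%:P) * f (H :\ v) - B) - (('X - (a u)%:P) * f H - A) * f (H :\ v)
   = A * f (H :\ v) - f H * B by ring.
rewrite /A /B mulr_suml mulr_sumr (sumD1c _ _ vH) -addrA; congr (_ + _).
  by case: (adj u v) => //; rewrite -scalerAl expr2.
have -> : \sum_(i in H :\ v | adj u i) f H * (c u i *: f (H :\ v :\ i))
   = \sum_(i in H | adj u i && (i != v)) f H * (c u i *: f (H :\ v :\ i)).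
  by apply: eq_bigl => w; rewrite in_setD1; case: (w \in H); case: (adj u w); case: (w == v).
rewrite -sumrB; apply: eq_bigr => w /andP [wH /andP [_ nwv]].
rewrite -scalerAl -scalerAr -scalerBr (setD1C H v w) IH //.
by rewrite /H (card_D1 uS).
Qed.

Lemma I4 (S : {set V}) u : u \in S ->
  f (S :\ u) * (f S)^`() - (f (S :\ u))^`() * f S
  = f (S :\ u) ^+ 2 + \sum_(v in S :\ u) sumL (PL #|S| S u v).
Proof.
move=> uS; rewrite !f_deriv (sumD1 _ uS) mulrDr expr2 -addrA; congr (_ + _).
rewrite mulr_sumr mulr_suml -sumrB; apply: eq_bigr => v vS.
have [nvu vS'] : v != u /\ v \in S by move: vS; rewrite !inE => /andP.
have nuv : u != v by rewrite eq_sym.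
by rewrite -(I3 uS vS' nuv) [f S * _]mulrC.
Qed.


Definition good (L : seq (C * {poly C})) := forall x, x \in L -> 0 < x.1 /\ rp x.2.

Lemma rp_XsubC t : t \is Num.real -> rp ('X - t%:P).
Proof.
by move=> tr; rewrite /rp rmorphB /= map_polyX map_polyC /=; move/CrealP: tr => ->.
Qed.

Lemma rp_div p q : rp p -> rp q -> rp (p %/ q).
Proof. by move=> hp hq; rewrite /rp map_divp hp hq. Qed.

Lemma rp_exp p k : rp p -> rp (p ^+ k).
Proof. by move=> hp; rewrite /rp rmorphXn /= hp. Qed.

Lemma sos_step (t : C) L k : t \is Num.real -> good L ->
  (forall x, x \in L -> ('X - t%:P) ^+ k %| x.2) ->
  ('X - t%:P) ^+ (2 * k).+1 %| sumL L -> forall x, x \in L -> ('X - t%:P) ^+ k.+1 %| x.2.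
Proof.
move=> tr gL; set d := 'X - t%:P => hk dv.
have dn0 : d != 0 by rewrite polyXsubC_eq0.
pose h (x : C * {poly C}) := x.2 %/ d ^+ k.
have hE : forall x, x \in L -> x.2 = h x * d ^+ k by move=> x /hk /divpK.
have sE : sumL L = d ^+ (2 * k) * \sum_(x <- L) x.1 *: h x ^+ 2.
  rewrite /sumL mulr_sumr big_seq_cond [RHS]big_seq_cond; apply: eq_bigr => x /andP [xL _].
  by rewrite (hE x xL) -scalerAr exprMn -exprM mulnC mulrC.
have ge : forall x, x \in L -> 0 <= (x.1 *: h x ^+ 2).[t].
  move=> x xL; have [p1 r2] := gL x xL; rewrite hornerZ horner_exp; apply: mulr_ge0; first exact: ltW.
  by apply: real_exprn_even_ge0 => //; apply: rp_horner => //; apply: rp_div => //; apply: rp_exp; apply: rp_XsubC.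
move: dv; rewrite sE exprSr dvdp_mul2l ?expf_neq0 // dvdp_XsubCl /root.
rewrite horner_sum big_seq_cond psumr_eq0; last by move=> i /andP [iL _]; exact: ge i iL.
move=> /allP H x xL; rewrite (hE x xL) exprS dvdp_mul2r ?expf_neq0 // dvdp_XsubCl /root.
have [p1 _] := gL x xL.
move: (H x xL); rewrite xL /= hornerZ mulf_eq0 (gt_eqF p1) /= horner_exp expf_eq0 /=.
done.
Qed.


Lemma sos_claim (t : C) L : t \is Num.real -> good L -> forall k,
  ('X - t%:P) ^+ (2 * k).+1 %| sumL L -> forall x, x \in L -> ('X - t%:P) ^+ k.+1 %| x.2.
Proof.
move=> tr gL; elim=> [|k IH] dv.
  by apply: sos_step => // x _; rewrite expr0 dvd1p.
apply: sos_step => //; apply: IH; apply: dvdp_trans dv; apply: dvdp_exp2l.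
by rewrite ltnS mulnS addSn ltnW // ltnS leq_addl.
Qed.

Lemma sos_dvd (t : C) L N c0 g : t \is Num.real -> good L -> (c0, g) \in L -> g != 0 ->
  ('X - t%:P) ^+ N %| sumL L -> (N <= 2 * mup t g)%N.
Proof.
move=> tr gL iL gn0 dv; rewrite leqNgt; apply/negP => lt.
have dv2 : ('X - t%:P) ^+ (2 * mup t g).+1 %| sumL L.
  by apply: dvdp_trans dv; apply: dvdp_exp2l.
have := sos_claim tr gL dv2 iL; rewrite /= -mup_geq //.
by rewrite ltnn.
Qed.


Lemma PL_good n : forall (S : {set V}) u v, good (PL n S u v).
Proof.
elim: n => [|n IH] S u v x //=; rewrite mem_cat => /orP [].
  case: (boolP (adj u v)) => auv; rewrite ?inE // => /eqP -> /=.
  by split; [exact: c_pos | exact: f_real].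
case/flatten_mapP => w; rewrite mem_filter => /andP [/andP [auw _] _] /mapP [y yL ->] /=.
have [y1 y2] := IH _ _ _ _ yL; split => //; exact: mulr_gt0 (c_pos auw) y1.
Qed.

Lemma dvd_deriv (t : C) p n : ('X - t%:P) ^+ n %| p -> ('X - t%:P) ^+ n.-1 %| p^`().
Proof.
set d := 'X - t%:P => dv; rewrite -(divpK dv) derivM deriv_exp derivXsubC mul1r.
apply: dvdp_add; first by apply: dvdp_mull; apply: dvdp_exp2l; exact: leq_pred.
by apply: dvdp_mull; rewrite -mulr_natr; apply: dvdp_mulr.
Qed.

Lemma mup_dvd (t : C) p : ('X - t%:P) ^+ (mup t p) %| p.
Proof.
have [->|pn0] := eqVneq p 0; first by rewrite dvdp0.
by rewrite -mup_geq.
Qed.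

Lemma mup_root (t : C) p : p != 0 -> root p t -> (0 < mup t p)%N.
Proof. by move=> pn0 rt; rewrite mup_geq // expr1 dvdp_XsubCl. Qed.

Lemma mup_vertex (S : {set V}) u t : u \in S -> (mup t (f S) <= (mup t (f (S :\ u))).+1)%N.
Proof.
move=> uS; case: (boolP (root (f S) t)) => rt; last by rewrite mupNroot.
have tr := f_root_real rt.
have m1 := mup_root (f_neq0 S) rt.
set m := mup t (f S); set m' := mup t (f (S :\ u)).
set L := (1, f (S :\ u)) :: flatten [seq PL #|S| S u v | v <- enum (S :\ u)].
have gL : good L.
  move=> x; rewrite inE => /orP [/eqP -> |]; first by split; [exact: ltr01 | exact: f_real].
  by case/flatten_mapP => v _; apply: PL_good.
have sL : sumL L = f (S :\ u) ^+ 2 + \sum_(v in S :\ u) sumL (PL #|S| S u v).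
  by rewrite /sumL big_cons scale1r big_flatten big_map big_enum.
have dv : ('X - t%:P) ^+ (m + m').-1 %| sumL L.
  rewrite sL -I4 //; apply: dvdp_sub.
    apply: dvdp_trans (dvdp_mul (mup_dvd t (f (S :\ u))) (dvd_deriv (mup_dvd t (f S)))).
    by rewrite -exprD; apply: dvdp_exp2l; rewrite -/m -/m'; lia.
  apply: dvdp_trans (dvdp_mul (dvd_deriv (mup_dvd t (f (S :\ u)))) (mup_dvd t (f S))).
  by rewrite -exprD; apply: dvdp_exp2l; rewrite -/m -/m'; lia.
have := sos_dvd tr gL (mem_head _ _) (f_neq0 _) dv; rewrite -/m'.
lia.
Qed.


Lemma mup_pathset (S : {set V}) u v t (P0 : {set V}) c0 : u \in S -> v \in S -> u != v ->
  (c0, f (S :\: P0)) \in PL #|S| S u v ->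
  (mup t (f S) <= (mup t (f (S :\: P0))).+1)%N.
Proof.
move=> uS vS nuv iP; case: (boolP (root (f S) t)) => rt; last by rewrite mupNroot.
have tr := f_root_real rt.
set m := mup t (f S).
have hu := mup_vertex t uS; have hv := mup_vertex t vS.
have vSu : v \in S :\ u by rewrite !inE vS andbT eq_sym.
have huv := mup_vertex t vSu.
have [le1|lt1] := leqP m 1; first by apply: leq_trans le1 _.
have gL : good (PL #|S| S u v) := @PL_good #|S| S u v.
have dv : ('X - t%:P) ^+ ((m.-1) + (m.-1)) %| sumL (PL #|S| S u v).
  rewrite -I3 //; apply: dvdp_sub.
    apply: dvdp_trans (dvdp_mul (mup_dvd t (f (S :\ u))) (mup_dvd t (f (S :\ v)))).
    by rewrite -exprD; apply: dvdp_exp2l; rewrite -/m in hu hv; lia.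
  apply: dvdp_trans (dvdp_mul (mup_dvd t (f S)) (mup_dvd t (f (S :\ u :\ v)))).
  by rewrite -exprD; apply: dvdp_exp2l; rewrite -/m in hu huv; lia.
have := sos_dvd tr gL iP (f_neq0 _) dv.
lia.
Qed.

Lemma path_entry (q : seq V) : forall (S : {set V}) u, u \in S -> path adj u q ->
  uniq (u :: q) -> all (mem S) q -> q != [::] ->
  exists c0, (c0, f (S :\: [set x in u :: q])) \in PL #|S| S u (last u q).
Proof.
elim: q => [|v q IH] // S u uS /= /andP [auv pq] /andP [nuq uq] /andP [vS aq] _.
rewrite (card_D1 uS) /=.
case: (eqVneq q [::]) => [qE|qn].
  exists (c u v); rewrite mem_cat; apply/orP; left; rewrite qE auv /= inE; apply/eqP; congr (_, f _).
  by apply/setP => y; rewrite !inE; case: (y == u); case: (y == v); case: (y \in S).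
have vSu : v \in S :\ u.
  by rewrite !inE vS andbT; apply: contraNneq nuq => ->; rewrite inE eqxx.
have aq' : all (mem (S :\ u)) q.
  apply/allP => y yq; have yS : y \in S := allP aq y yq.
  rewrite /= !inE yS andbT.
  by apply: contraNneq nuq => <-; rewrite inE yq orbT.
have [c1 iP] := IH (S :\ u) v vSu pq uq aq' qn.
exists (c u v * c1); rewrite mem_cat; apply/orP; right; apply/flatten_mapP; exists v.
  rewrite mem_filter mem_enum vSu auv andbT /=.
  case: q qn {IH iP pq aq aq'} nuq uq => // y q' _ _ /andP [nvq _] /=.
  apply: contraNneq nvq => ->; exact: mem_last.
have -> : S :\: [set x in [:: u, v & q]] = S :\ u :\: [set x in v :: q].
  by apply/setP => y; rewrite !inE; case: (y == u); case: (y == v); case: (y \in q); case: (y \in S).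
exact: (map_f (fun x => (c u v * x.1, x.2)) iP).
Qed.


Lemma mup_gpath (S : {set V}) (p : seq V) t : (if p is x :: q then uniq p && path adj x q else false) -> all (mem S) p ->
  (mup t (f S) <= (mup t (f (S :\: [set x in p]))).+1)%N.
Proof.
case: p => [|u q] //= /andP [/andP [nuq uq] pq] /andP [uS aq].
case: (eqVneq q [::]) => [qE|qn].
  have -> : S :\: [set x in u :: q] = S :\ u.
    by apply/setP => y; rewrite qE !inE; case: (y == u).
  exact: mup_vertex.
have [c0 iP] := path_entry uS pq (ltac:(by rewrite /= nuq uq)) aq qn.
have lq : last u q \in q by case: q qn {iP pq aq nuq uq} => // y q' _ /=; apply: mem_last.
apply: (mup_pathset _ uS _ _ iP).
  by apply: (allP aq).
by apply: contraNneq nuq => ->.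
Qed.


Lemma mup_cover (P : seq (seq V)) : forall (S : {set V}) t,
  all (fun p => if p is x :: q then uniq p && path adj x q else false) P ->
  uniq (flatten P) -> all (mem S) (flatten P) ->
  (mup t (f S) <= size P + mup t (f (S :\: [set x in flatten P])))%N.
Proof.
elim: P => [|p P IH] S t /=.
  move=> _ _ _; have -> : S :\: [set x in [::]] = S by apply/setP => y; rewrite !inE.
  by [].
move=> /andP [gp gP]; rewrite cat_uniq all_cat => /and3P [up hp uP] /andP [ap aP].
set S1 := S :\: [set x in p].
have aP1 : all (mem S1) (flatten P).
  apply/allP => y yP; have yS : y \in S := allP aP y yP.
  rewrite /= !inE yS andbT.
  by apply: contra hp => yp; apply/hasP; exists y.
have h1 := mup_gpath t gp ap; rewrite -/S1 in h1.
have h2 := IH S1 t gP uP aP1.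
have -> : S :\: [set x in p ++ flatten P] = S1 :\: [set x in flatten P].
  by apply/setP => y; rewrite /S1 !inE mem_cat; case: (y \in p); case: (y \in flatten P); case: (y \in S).
lia.
Qed.

End Abs.

End AbsM.

Import CombM AbsM.


Lemma count_sum_uniq (T : eqType) (s r : seq T) : uniq s ->
  (\sum_(z <- s) count_mem z r)%N = count (mem s) r.
Proof.
elim: s => [|x s IH] /=; first by rewrite big_nil count_pred0.
case/andP => nxs us; rewrite big_cons IH //.
have E0 : count (predI (pred1 x) (mem s)) r = 0%N.
  rewrite (eq_count (a2 := pred0)) ?count_pred0 // => y /=.
  by case: eqP => // ->; apply: negbTE.
rewrite -count_predUI E0 addn0; apply: eq_count => y /=; by rewrite inE.
Qed.

Theorem corollary4p7 (C : numClosedFieldType) (V : finType) (adj : rel V)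
    (adj_sym : symmetric adj) (adj_irr : irreflexive adj)
    (w : {set V} -> C) (w1 : V -> C)
    (w_nz : forall x y : V, adj x y -> w [set x; y] != 0)
    (w1_real : forall y : V, w1 y \is Num.real) :
  (forall (z : C) (P : seq (seq V)),
     root (eta_w adj w w1) z -> is_path_cover adj P ->
     (mup z (eta_w adj w w1) <= size P)%N)
  /\
  (forall p : seq V, is_gpath adj p ->
     exists s : seq C,
       [/\ uniq s, all (root (eta_w adj w w1)) s & (size p <= size s)%N]).
Proof.
pose c := fun u v : V => `|w [set u; v]| ^+ 2.
have c_pos : forall u v, adj u v -> 0 < c u v.
  by move=> u v auv; rewrite /c exprn_gt0 // normr_gt0 w_nz.
have f0 := etaS0 adj w w1.
have frec := etaS_rec adj_sym adj_irr w w1.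
rewrite eta_etaS; set F := etaS adj w w1.
split.
  move=> z P _ /andP [/andP [gP uP] /eqP cP].
  have aP : all (mem [set: V]) (flatten P) by apply/allP => y _; rewrite /= inE.
  have := mup_cover (c := c) w1_real c_pos f0 frec z gP uP aP.
  have -> : [set x in flatten P] = [set: V].
    apply/eqP; rewrite eqEcard subsetT cardsT cardsE cP /=.
    by move/card_uniqP: uP => ->.
  by rewrite setDv f0 (mupNroot (root1 z)) addn0.
move=> p gp.
have ap : all (mem [set: V]) p by apply/allP => y _; rewrite /= inE.
have hm := fun t => mup_gpath (c := c) w1_real c_pos f0 frec t gp ap.
have mon : forall S, F S = \prod_(z <- sval (closed_field_poly_normal (F S))) ('X - z%:P).
  move=> S; case: (closed_field_poly_normal (F S)) => r /= Er.
  have /andP [/monicP L1 _] := f_monic (c := c) f0 frec S.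
  by rewrite {1}Er L1 scale1r.
set r := sval (closed_field_poly_normal (F [set: V])).
set r2 := sval (closed_field_poly_normal (F ([set: V] :\: [set x in p]))).
have sr : size r = #|V|.
  have := f_size (c := c) f0 frec [set: V]; rewrite -/F {1}mon size_prod_XsubC cardsT.
  by case.
have sr2 : (size r2 + size p = #|V|)%N.
  have := f_size (c := c) f0 frec ([set: V] :\: [set x in p]).
  rewrite -/F {1}mon size_prod_XsubC => [[->]].
  have up : uniq p by move: gp; rewrite /is_gpath; case: (p) => // x q /andP [].
  have cp : #|[set x in p]| = size p by rewrite cardsE; apply/card_uniqP.
  by rewrite setTD -cp addnC cardsC.
exists (undup r); split; first exact: undup_uniq.
  apply/allP => z; rewrite mem_undup => zr; rewrite (mon [set: V]) -/r root_prod_XsubC //.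
have e1 : size r = (\sum_(z <- undup r) mup z (F [set: V]))%N.
  rewrite (mon [set: V]) -/r.
  under eq_bigr => z _ do rewrite mu_prod_XsubC.
  rewrite count_sum_uniq ?undup_uniq //.
  rewrite (eq_in_count (a2 := predT)) ?count_predT // => y yr /=.
  by rewrite mem_undup.
have e2 : (\sum_(z <- undup r) mup z (F ([set: V] :\: [set x in p])) <= size r2)%N.
  rewrite (mon ([set: V] :\: [set x in p])) -/r2.
  under eq_bigr => z _ do rewrite mu_prod_XsubC.
  rewrite count_sum_uniq ?undup_uniq //; exact: count_size.
have e3 : (\sum_(z <- undup r) mup z (F [set: V]) <=
     \sum_(z <- undup r) (mup z (F ([set: V] :\: [set x in p])) + 1))%N.
  by apply: leq_sum => z _; rewrite addn1; apply: hm.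
move: e3; rewrite -e1 sr big_split /= sum1_size => e3.
have e4 := leq_trans e3 (leq_add e2 (leqnn (size (undup r)))).
by rewrite -sr2 leq_add2l in e4.
Qed.
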